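(* Let $X$ be an $\mathcal M$-set, let $A\subset\omega$ be co-infinite, and let $x\in X$ be supported on $A$. Then: (1) if $f,g\in\mathcal M$ agree on $A$, then $f.x=g.x$; (2) for every $f\in\mathcal M$, $f.x$ is supported on $f(A)$; (3) if $f\in\mathcal M$ and $A'\subset A$ are such that $f.x$ is supported on $f(A')$, then $x$ is supported on $A'$.
   Context: $\omega=\{1,2,3,\dots\}$, $\mathcal M$ the monoid of injections $\omega\to\omega$; an $\mathcal M$-set is a set with left $\mathcal M$-action. For $A\subset\omega$, $\mathcal M_A$ is the submonoid of injections fixing $A$ elementwise, and $x$ is supported on $A$ if $f.x=x$ for all $f\in\mathcal M_A$. $A$ is co-infinite if $\omega\setminus A$ is infinite. *)

(* Defs.v *)
From Stdlib Require Import Arith.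

(* omega = {1,2,3,...} is modelled by nat (relabel n+1 <-> n); the statement is
   invariant under this bijection. *)
Definition omega := nat.

Record Inj := mkInj { ifun :> omega -> omega; ifun_inj : forall a b, ifun a = ifun b -> a = b }.

Definition id_inj : Inj := mkInj (fun n => n) (fun a b h => h).
Definition comp_inj (f g : Inj) : Inj.
Proof.
  refine (mkInj (fun n => f (g n)) _).
  intros a b h. apply (ifun_inj g), (ifun_inj f), h.
Defined.

Record MSet := {
  carrier :> Type;
  act : Inj -> carrier -> carrier;
  act_id : forall x, act id_inj x = x;
  act_comp : forall (f g : Inj) x, act (comp_inj f g) x = act f (act g x)
}.

Definition subset (A B : omega -> Prop) := forall a, A a -> B a.

Definition fixes (A : omega -> Prop) (f : Inj) := forall a, A a -> f a = a.
Definition supported_on (X : MSet) (A : omega -> Prop) (x : X) :=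
  forall f : Inj, fixes A f -> act X f x = x.

Definition coinfinite (A : omega -> Prop) := forall n : omega, exists m, n <= m /\ ~ A m.

Definition image (f : Inj) (A : omega -> Prop) : omega -> Prop :=
  fun y => exists a, A a /\ f a = y.

(* Main.v *)
Require Import Defs.
From Stdlib Require Import List Arith Lia Classical ClassicalEpsilon FinFun FunctionalExtensionality ProofIrrelevance.

Lemma choice_nat (R : nat -> nat -> Prop) : (forall x, exists y, R x y) -> exists f, forall x, R x (f x).
Proof.
  intros H. exists (fun x => proj1_sig (constructive_indefinite_description _ (H x))).
  intros x. exact (proj2_sig (constructive_indefinite_description _ (H x))).
Qed.

Definition infinite (P : nat -> Prop) := forall n, exists m, n <= m /\ P m.

Lemma pigeon (phi : nat -> nat) : (forall a b, phi a = phi b -> a = b) ->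
  forall n, exists k, n <= phi k.
Proof.
  intros Hi n. apply NNPP; intro Hn.
  assert (Hl : forall k, phi k < n).
  { intro k. destruct (Nat.lt_ge_cases (phi k) n); auto. exfalso; apply Hn; eauto. }
  assert (H := @NoDup_incl_length _ (map phi (seq 0 (S n))) (seq 0 n)
     (Injective_map_NoDup Hi (seq_NoDup _ _))).
  rewrite length_map, !length_seq in H.
  assert (S n <= n); [|lia]. apply H.
  intros y Hy. apply in_map_iff in Hy. destruct Hy as [k [<- _]]. apply in_seq. specialize (Hl k). lia.
Qed.

Lemma least (P : nat -> Prop) k : infinite P ->
  exists m, (k <= m /\ P m) /\ forall j, k <= j -> P j -> m <= j.
Proof.
  intros HP. destruct (dec_inh_nat_subset_has_unique_least_element (fun m => k <= m /\ P m))
    as [m [[H1 H2] _]].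
  - intro n; apply classic.
  - destruct (HP k) as [m Hm]; eauto.
  - exists m; split; auto.
Qed.

Lemma enum (P : nat -> Prop) : infinite P ->
  exists e : nat -> nat, (forall n, P (e n)) /\ (forall a b, e a = e b -> a = b)
    /\ (forall m, P m -> exists n, e n = m).
Proof.
  intros HP. destruct (choice_nat (fun k m => (k <= m /\ P m) /\ forall j, k <= j -> P j -> m <= j))
    as [nx Hnx]. { intro k; apply least; auto. }
  set (e := fix e n := match n with 0 => nx 0 | S n => nx (S (e n)) end).
  assert (HeP : forall n, P (e n)). { intros [|n]; simpl; apply Hnx. }
  assert (Hs : forall n, e n < e (S n)). { intro n. simpl. destruct (Hnx (S (e n))) as [[? _] _]. lia. }
  assert (Hmono : forall a b, a < b -> e a < e b).
  { intros a b Hab. induction Hab. apply Hs. specialize (Hs m). lia. }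
  assert (Hge : forall n, n <= e n). { induction n. lia. specialize (Hs n); lia. }
  exists e. split; [auto|split].
  - intros a b H. destruct (Nat.lt_trichotomy a b) as [h|[h|h]]; auto;
      apply Hmono in h; lia.
  - assert (Hc : forall k m, P m -> m < e k -> exists n, e n = m).
    { induction k; intros m Hm Hlt.
      - simpl in Hlt. destruct (Hnx 0) as [_ H]. specialize (H m ltac:(lia) Hm). lia.
      - destruct (Nat.lt_trichotomy m (e k)) as [h|[h|h]].
        + eauto.
        + eauto.
        + simpl in Hlt. destruct (Hnx (S (e k))) as [_ H]. specialize (H m h Hm). lia. }
    intros m Hm. apply (Hc (S m)); auto.
Qed.

Lemma bij (P Q : nat -> Prop) : infinite P -> infinite Q ->
  exists phi psi : nat -> nat, (forall n, P n -> Q (phi n)) /\ (forall m, Q m -> P (psi m))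
   /\ (forall n, P n -> psi (phi n) = n) /\ (forall m, Q m -> phi (psi m) = m).
Proof.
  intros HP HQ. destruct (enum P HP) as [eP [eP1 [eP2 eP3]]].
  destruct (enum Q HQ) as [eQ [eQ1 [eQ2 eQ3]]].
  destruct (choice_nat (fun m n => P m -> eP n = m)) as [iP HiP].
  { intro m. destruct (classic (P m)) as [h|h]. destruct (eP3 m h) as [n Hn]; eauto. exists 0; tauto. }
  destruct (choice_nat (fun m n => Q m -> eQ n = m)) as [iQ HiQ].
  { intro m. destruct (classic (Q m)) as [h|h]. destruct (eQ3 m h) as [n Hn]; eauto. exists 0; tauto. }
  exists (fun n => eQ (iP n)), (fun m => eP (iQ m)). repeat split; auto.
  - intros n Hn. rewrite <- (HiP n Hn) at 2. f_equal. apply eQ2. apply HiQ; auto.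
  - intros m Hm. rewrite <- (HiQ m Hm) at 2. f_equal. apply eP2. apply HiP; auto.
Qed.

Definition dec (P : Prop) : bool := if excluded_middle_informative P then true else false.
Lemma decT (P : Prop) : P -> dec P = true.
Proof. unfold dec; destruct (excluded_middle_informative P); tauto. Qed.
Lemma decF (P : Prop) : ~P -> dec P = false.
Proof. unfold dec; destruct (excluded_middle_informative P); tauto. Qed.

Lemma img_inf (A : omega -> Prop) (f : Inj) : coinfinite A -> infinite (fun m => ~ image f A m).
Proof.
  intros HA. destruct (enum _ HA) as [e [e1 [e2 _]]].
  intro n. destruct (pigeon (fun k => f (e k))) with n as [k Hk].
  { intros a b h. apply e2, (ifun_inj f), h. }
  exists (f (e k)). split; auto. intros [a [Ha Hfa]]. apply (ifun_inj f) in Hfa. subst. apply (e1 k); auto.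
Qed.

Lemma Inj_ext (f g : Inj) : (forall n, f n = g n) -> f = g.
Proof.
  destruct f as [f fi], g as [g gi]. simpl. intro E.
  assert (f = g) by (apply functional_extensionality_dep; exact E). subst g.
  f_equal. apply proof_irrelevance.
Qed.

Lemma part1 (X : MSet) (A : omega -> Prop) (x : X) :
  coinfinite A -> supported_on X A x ->
  forall f g : Inj, (forall a, A a -> f a = g a) -> act X f x = act X g x.
Proof.
  intros HA Hx f g Hfg.
  destruct (bij (fun n => ~ A n) (fun m => ~ image f A m) HA (img_inf A f HA))
    as [phi [psi [H1 [H2 [H3 H4]]]]].
  assert (Hu : forall a b, (if dec (A a) then f a else phi a) = (if dec (A b) then f b else phi b) -> a = b).
  { intros a b. destruct (classic (A a)) as [ha|ha]; [rewrite (decT _ ha)|rewrite (decF _ ha)];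
    (destruct (classic (A b)) as [hb|hb]; [rewrite (decT _ hb)|rewrite (decF _ hb)]); intro E.
    - apply (ifun_inj f), E.
    - exfalso. apply (H1 b hb). exists a; auto.
    - exfalso. apply (H1 a ha). exists b; auto.
    - rewrite <- (H3 a ha), <- (H3 b hb), E; auto. }
  set (u := mkInj _ Hu).
  assert (key : forall g : Inj, (forall a, A a -> f a = g a) -> act X g x = act X u x).
  { intros k Hk.
    assert (Hnf : forall n, ~ A n -> ~ image f A (k n)).
    { intros n hn [a [ha E]]. rewrite Hk in E by auto. apply (ifun_inj k) in E. subst; auto. }
    assert (Hh : forall a b, (if dec (A a) then a else psi (k a)) = (if dec (A b) then b else psi (k b)) -> a = b).
    { intros a b. destruct (classic (A a)) as [ha|ha]; [rewrite (decT _ ha)|rewrite (decF _ ha)];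
      (destruct (classic (A b)) as [hb|hb]; [rewrite (decT _ hb)|rewrite (decF _ hb)]); intro E.
      - auto.
      - exfalso. apply (H2 _ (Hnf b hb)). rewrite <- E; auto.
      - exfalso. apply (H2 _ (Hnf a ha)). rewrite E; auto.
      - apply (ifun_inj k). rewrite <- (H4 _ (Hnf a ha)), <- (H4 _ (Hnf b hb)), E; auto. }
    set (h := mkInj _ Hh).
    assert (Hfix : fixes A h). { intros a ha. simpl. rewrite (decT _ ha); auto. }
    assert (Ek : forall n, k n = u (h n)).
    { intro n. simpl. destruct (classic (A n)) as [hn|hn].
      - rewrite !(decT _ hn). symmetry; auto.
      - rewrite (decF _ hn). rewrite (decF _ (H2 _ (Hnf n hn))). rewrite H4; auto. }
    rewrite <- (Hx h Hfix) at 2. rewrite <- act_comp.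
    f_equal. apply Inj_ext. exact Ek. }
  rewrite (key f), (key g); auto.
Qed.

Lemma rinv_lemma (r s : nat -> nat) : (forall n, s (r n) = n) -> forall a b, r a = r b -> a = b.
Proof. intros H a b E. rewrite <- (H a), <- (H b), E; auto. Qed.

Theorem lemma1p3 (X : MSet) (A : omega -> Prop) (x : X) :
  coinfinite A -> supported_on X A x ->
  (forall f g : Inj, (forall a, A a -> f a = g a) -> act X f x = act X g x) /\
  (forall f : Inj, supported_on X (image f A) (act X f x)) /\
  (forall (f : Inj) (A' : omega -> Prop), subset A' A ->
     supported_on X (image f A') (act X f x) -> supported_on X A' x).
Proof.
  intros HA Hx. pose proof (part1 X A x HA Hx) as P1. split; [exact P1|split].
  - intros f k Hk. rewrite <- act_comp. apply P1. intros a ha. simpl. apply Hk. exists a; auto.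
  - intros f A' HA' Hy k Hk.
    destruct (bij (fun m => ~ image f A m) (fun n => ~ A n) (img_inf A f HA) HA)
      as [phi [psi [H1 [H2 [H3 H4]]]]].
    destruct (choice_nat (fun n m => image f A n -> A m /\ f m = n)) as [fi Hfi].
    { intro n. destruct (classic (image f A n)) as [[a [ha e]]|h]. exists a; auto. exists 0; tauto. }
    set (r := fun n => if dec (image f A n) then fi n else phi n).
    set (ri := fun m => if dec (A m) then f m else psi m).
    assert (E1 : forall m, r (ri m) = m).
    { intro m. unfold r, ri. destruct (classic (A m)) as [h|h].
      - rewrite (decT _ h). assert (hi : image f A (f m)) by (exists m; auto).
        rewrite (decT _ hi). destruct (Hfi _ hi) as [_ e]. apply (ifun_inj f); auto.
      - rewrite (decF _ h). rewrite (decF _ (H2 _ h)). auto. }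
    assert (E2 : forall n, ri (r n) = n).
    { intro n. unfold r, ri. destruct (classic (image f A n)) as [h|h].
      - rewrite (decT _ h). destruct (Hfi _ h) as [ha e]. rewrite (decT _ ha). auto.
      - rewrite (decF _ h). rewrite (decF _ (H1 _ h)). auto. }
    set (rI := mkInj r (rinv_lemma r ri E2)).
    set (riI := mkInj ri (rinv_lemma ri r E1)).
    set (k' := comp_inj riI (comp_inj k rI)).
    assert (Hk' : fixes (image f A') k').
    { intros n [a [ha e]]. subst n. simpl.
      assert (hi : image f A (f a)) by (exists a; auto).
      assert (r (f a) = a) as ->.
      { unfold r. rewrite (decT _ hi). destruct (Hfi _ hi) as [_ e]. apply (ifun_inj f); auto. }
      rewrite (Hk a ha). unfold ri. rewrite (decT _ (HA' a ha)). auto. }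
    assert (Ex : act X rI (act X f x) = x).
    { rewrite <- act_comp. rewrite <- (act_id X x) at 2. apply P1.
      intros a ha. simpl. assert (hi : image f A (f a)) by (exists a; auto).
      unfold r. rewrite (decT _ hi). destruct (Hfi _ hi) as [_ e]. apply (ifun_inj f); auto. }
    rewrite <- Ex. transitivity (act X rI (act X k' (act X f x))).
    + rewrite <- !act_comp. f_equal. apply Inj_ext. intro n. simpl. rewrite E1. auto.
    + rewrite (Hy k' Hk'). reflexivity.
Qed.
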